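(* Let $\Gamma=\mathrm{Cay}(G,S)$ be a connected bipartite Cayley graph on $2n$ vertices with valency $k$, and let $H$ be the part of this bipartite graph containing the identity element (a normal subgroup of index $2$ in $G$). If $n$ is not divisible by $4$ and $0$ is not an eigenvalue of (the adjacency matrix of) $\Gamma$, then there is an involution $a\in G\setminus H$, so that $G=H\rtimes\langle a\rangle\cong H\rtimes\mathbb{Z}_2$.
   Context: For a finite group $G$ with identity $e$ and a subset $S\subseteq G\setminus\{e\}$ with $S=S^{-1}$, the Cayley graph $\mathrm{Cay}(G,S)$ has vertex set $G$, two vertices $a,b$ being adjacent iff $ab^{-1}\in S$. *)

(* Defs.v *)
From mathcomp Require Import all_boot all_order all_algebra all_fingroup all_solvable all_field.
Set Implicit Arguments. Unset Strict Implicit. Unset Printing Implicit Defensive.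
Import GRing.Theory Num.Theory.
Local Open Scope group_scope.

Definition cay_adj (gT : finGroupType) (S : {set gT}) : rel gT :=
  fun a b => a * b^-1 \in S.

Definition cay_connected (gT : finGroupType) (S : {set gT}) : Prop :=
  forall a b : gT, connect (cay_adj S) a b.

Definition cay_bipartition (gT : finGroupType) (S : {set gT}) (c : gT -> bool)
  : Prop := forall a b : gT, cay_adj S a b -> c a != c b.

Definition cay_part (gT : finGroupType) (c : gT -> bool) : {set gT} :=
  [set x | c x == c 1].

Definition cay_adjmx (gT : finGroupType) (S : {set gT}) : 'M[algC]_#|gT| :=
  \matrix_(i, j) ((cay_adj S (enum_val i) (enum_val j))%:R)%R.

(* Main.v *)
Require Import Defs.
From mathcomp Require Import all_boot all_order all_algebra all_fingroup all_solvable all_field.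
From mathcomp Require Import zify.
Set Implicit Arguments. Unset Strict Implicit. Unset Printing Implicit Defensive.
Local Open Scope group_scope.

Lemma odd_perm_invol (T : finType) k : forall (s : {perm T}),
  #|[set x | s x != x]| <= k -> (forall x, s (s x) = x) ->
  odd_perm s = odd (#|[set x | s x != x]|./2).
Proof.
have S1 : forall s : {perm T}, [set x | s x != x] = set0 -> s = 1.
  move=> s E; apply/permP => z; rewrite perm1.
  case: (eqVneq (s z) z) => // Hz.
  have : z \in [set x | s x != x] by rewrite inE.
  by rewrite E inE.
elim: k => [|k IH] s Hk Hs.
  have E : [set x | s x != x] = set0.
    by apply/eqP; rewrite -cards_eq0 -leqn0.
  by rewrite E cards0 (S1 s E) odd_perm1.
case: (set_0Vmem [set x | s x != x]) => [E|[x Hx]].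
  by rewrite E cards0 (S1 s E) odd_perm1.
set y := s x.
have Hxy : x != y by move: Hx; rewrite inE eq_sym.
set s' := tperm x y * s.
have Es' : forall z, s' z = if z == x then x else if z == y then y else s z.
  move=> z; rewrite permM; case: tpermP => [->|->|].
  - by rewrite eqxx /y Hs.
  - by rewrite eq_sym (negbTE Hxy) eqxx.
  - by move=> /eqP/negbTE -> /eqP/negbTE ->.
have Hy : y \in [set x | s x != x].
  rewrite inE /y Hs. exact: Hxy.
have EM : [set z | s' z != z] = [set z | s z != z] :\ x :\ y.
  apply/setP => z; rewrite !inE Es'.
  case: (eqVneq z x) => [->|Hzx]; first by rewrite eqxx andbF.
  case: (eqVneq z y) => [->|Hzy]; first by rewrite eqxx.
  by [].
have Hs' : forall z, s' (s' z) = z.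
  move=> z; rewrite !Es'.
  case: (eqVneq z x) => [->|Hzx]; first by rewrite eqxx.
  case: (eqVneq z y) => [->|Hzy]; first by rewrite eqxx; case: eqP.
  case: (eqVneq (s z) x) => [Hsx|Hsx].
    by move: (congr1 s Hsx); rewrite Hs -/y => E; rewrite E eqxx in Hzy.
  case: (eqVneq (s z) y) => [Hsy|Hsy].
    by move: (congr1 s Hsy); rewrite Hs /y Hs => E; rewrite E eqxx in Hzx.
  by rewrite Hs.
have C : #|[set x | s x != x]| = (#|[set z | s' z != z]|).+2.
  have Hy' : y \in [set z | s z != z] :\ x by rewrite in_setD1 eq_sym Hxy Hy.
  rewrite EM (cardsD1 x [set z | s z != z]) Hx (cardsD1 y ([set z | s z != z] :\ x)) Hy'.
  by rewrite add1n add1n.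
have : odd_perm s' = ~~ odd_perm s by rewrite /s' odd_mul_tperm Hxy.
have Hk' : #|[set z | s' z != z]| <= k by move: Hk; rewrite C ltnS; apply: ltnW.
rewrite (IH s' Hk' Hs').
move=> E; rewrite C /=; move: E; case: (odd_perm s); case: odd => //.
Qed.

Section Chi.
Variables (gT : finGroupType) (chi : gT -> bool).
Hypothesis chiM : forall x y, chi (x * y) = chi x (+) chi y.

Lemma chi1 : chi 1 = false.
Proof. by have := chiM 1 1; rewrite mulg1 => E; apply/negP => H; move: E; rewrite H. Qed.

Lemma chiV x : chi x^-1 = chi x.
Proof. by have := chiM x x^-1; rewrite mulgV chi1; case: (chi x); case: (chi x^-1). Qed.

Lemma chiJ x y : chi (x ^ y) = chi x.
Proof. by rewrite conjgE !chiM chiV; case: (chi x); case: (chi y). Qed.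

Lemma chiX x k : chi (x ^+ k) = odd k && chi x.
Proof.
elim: k => [|k IH]; first by rewrite expg0 chi1.
by rewrite expgS chiM IH /=; case: (chi x); case: (odd k).
Qed.

Definition hfix h := if chi h then 1 else h.
Lemma chi_hfix h : chi (hfix h) = false.
Proof. by rewrite /hfix; case: ifP => // _; rewrite chi1. Qed.

Definition pf h (w : gT) := if chi w then w else w * hfix h.
Lemma pf_inj h : injective (pf h).
Proof.
move=> w1 w2; rewrite /pf.
case E1: (chi w1); case E2: (chi w2) => //.
- by move=> E; move: E1; rewrite E chiM E2 chi_hfix.
- by move=> E; move: E2; rewrite -E chiM E1 chi_hfix.
- exact: mulIg.
Qed.

Definition pp h : {perm gT} := perm (@pf_inj h).
Definition dl h := odd_perm (pp h).

Lemma ppE h w : pp h w = pf h w.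
Proof. by rewrite permE. Qed.

Lemma dlM h1 h2 : ~~ chi h1 -> ~~ chi h2 -> dl (h1 * h2) = dl h1 (+) dl h2.
Proof.
move=> /negbTE H1 /negbTE H2; rewrite /dl -odd_permM; congr odd_perm.
apply/permP => w; rewrite permM !ppE /pf /hfix (chiM h1 h2) H1 H2 /=.
case Hw: (chi w) => /=; first by rewrite Hw.
by rewrite (chiM w h1) Hw H1 /= mulgA.
Qed.

Lemma dlJ h g : ~~ chi h -> dl (h ^ g) = dl h.
Proof.
move=> /negbTE H.
have qi : injective (fun w => w ^ g) by move=> w1 w2; apply: conjg_inj.
pose q : {perm gT} := perm qi.
have E : pp h * q = q * pp (h ^ g).
  apply/permP => w; rewrite !permM !permE /pf /hfix chiJ H chiJ.
  by case: (chi w) => //; rewrite H conjMg.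
have := congr1 (@odd_perm _) E; rewrite !odd_permM /dl.
by case: (odd_perm q); case: (odd_perm (pp h)); case: (odd_perm (pp (h ^ g))).
Qed.

Lemma dl1 : dl 1 = false.
Proof.
rewrite /dl -(odd_perm1 gT); congr odd_perm; apply/permP => w.
by rewrite ppE perm1 /pf /hfix chi1; case: ifP => //; rewrite mulg1.
Qed.

Lemma dl_invol z : ~~ chi z -> z * z = 1 -> z != 1 ->
  dl z = odd (#|[set w | ~~ chi w]|./2).
Proof.
move=> /negbTE H zz z1; rewrite /dl (@odd_perm_invol _ #|gT|).
- have -> : [set w | pp z w != w] = [set w | ~~ chi w]; last by [].
  apply/setP => w; rewrite !inE ppE /pf /hfix H.
  case: ifP => Hw //=; first by rewrite eqxx.
  apply/negP => /eqP E; move/negP: z1; apply; apply/eqP.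
  by apply: (mulgI w); rewrite mulg1.
- by rewrite max_card.
- move=> w; rewrite !ppE /pf /hfix H.
  case Hw: (chi w); first by rewrite Hw.
  by rewrite (chiM w z) Hw H /= -mulgA zz mulg1.
Qed.

End Chi.

Lemma conclude (gT : finGroupType) (c : gT -> bool)
  (chiM : forall x y, (c (x*y) != c 1) = (c x != c 1) (+) (c y != c 1)) a :
  (c a != c 1) -> a ^+ 2 = 1 ->
  [/\ a \notin cay_part c, a != 1, a ^+ 2 = 1 & cay_part c ><| <[a]> = [set: gT]].
Proof.
set chi := fun x => c x != c 1.
move=> Ha a2.
have chi1 : chi 1 = false by rewrite /chi eqxx.
have Hg : group_set (cay_part c).
  apply/group_setP; split; first by rewrite inE.
  move=> x y; rewrite !inE => Hx Hy.
  by have := chiM x y; rewrite Hx Hy /= => /negbFE.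
have a1 : a != 1 by apply: contraTneq Ha => ->; rewrite eqxx.
have Hcyc : forall x, x \in <[a]> -> x \in cay_part c -> x = 1.
  move=> x /cycleP [i ->]; rewrite inE.
  have E : a ^+ i = a ^+ (odd i).
    by rewrite -{1}(odd_double_half i) expgD -mul2n expgM a2 expg1n mulg1.
  rewrite E; case: (odd i) => //=; rewrite expg1 => H.
  by move: Ha; rewrite (eqP H) eqxx.
split => //; first by rewrite inE.
rewrite (@sdprodE _ (Group Hg) <[a]>%G) /=.
- apply/eqP; rewrite eqEsubset subsetT /=; apply/subsetP => x _.
  case Hx: (c x != c 1).
  + have -> : x = (x * a^-1) * a by rewrite mulgKV.
    apply: mem_mulg; last exact: cycle_id.
    rewrite inE; have := chiM x a^-1.
    have := chiM a a^-1; rewrite mulgV eqxx Ha.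
    case: (c a^-1 != c 1) => //= _.
    by rewrite Hx /= => /negbFE.
  + rewrite -[x]mulg1; apply: mem_mulg; first by rewrite inE; apply/negbFE.
    exact: group1.
- rewrite cycle_subG; apply/normP/setP => x; rewrite mem_conjg !inE.
  by apply: negb_inj; exact: (chiJ chiM x a^-1).
- apply/setP => x; rewrite inE in_set1; apply/idP/idP.
    by move=> /andP [Hx Hx']; rewrite (Hcyc x Hx' Hx).
  by move=> /eqP ->; rewrite group1 andbT inE.
Qed.
Unset Implicit Arguments.
Import GRing.Theory Num.Theory.

Theorem proposition3p5 (gT : finGroupType) (S : {set gT}) (n k : nat)
    (c : gT -> bool) :
  1 \notin S ->
  (forall x, x \in S -> x^-1 \in S) ->
  #|gT| = (2 * n)%N ->
  #|S| = k ->
  cay_connected S ->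
  cay_bipartition S c ->
  ~~ (4 %| n)%N ->
  ~~ eigenvalue (cay_adjmx S) 0%R ->
  exists a : gT,
    [/\ a \notin cay_part c, a != 1, a ^+ 2 = 1
      & cay_part c ><| <[a]> = [set: gT]].
Proof.
move=> S1 SV Hcard _ Hconn Hbip H4 Heig.
set chi := fun x => c x != c 1.
have chiS : forall s w, s \in S -> chi (s * w) = ~~ chi w.
  move=> s w Hs; have := Hbip (s * w) w; rewrite /cay_adj mulgK Hs => /(_ isT).
  by rewrite /chi; case: (c (s * w)); case: (c w); case: (c 1).
have chi1 : chi 1 = false by rewrite /chi eqxx.
have chiM : forall x y, chi (x * y) = chi x (+) chi y.
  move=> x; have /connectP [p] := Hconn x 1.
  elim: p x => [|x1 p IH] x /=.
    by move=> _ <- y; rewrite mul1g chi1.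
  move=> /andP [Hx Hp] Hl y; have IH' := IH x1 Hp Hl.
  rewrite -[x](mulgKV x1) -mulgA (chiS _ (x1 * y) Hx) (chiS _ x1 Hx) IH'.
  by case: (chi x1); case: (chi y).
have [t tS] : exists t, t \in S.
  case: (set_0Vmem S) => [S0|[x Hx]]; last by exists x.
  have All1 : forall x : gT, x = 1.
    move=> x; have /connectP [[|x1 p] /=] := Hconn x 1; first by move=> _ <-.
    by move=> /andP [Hx _]; move: Hx; rewrite /cay_adj S0 inE.
  have : #|gT| = 1%N.
    rewrite -cardsT (_ : [set: gT] = [set 1]) ?cards1 //.
    by apply/setP => x; rewrite !inE (All1 x) eqxx.
  by rewrite Hcard; case: n {Hcard H4} => [|[|]].
have chit : chi t by rewrite -(mulg1 t) chiS // chi1.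
have Ho : (#[t] %| 2 * n)%N.
  by rewrite -Hcard -cardsT; apply: (@order_dvdG _ [set: gT]%G); rewrite inE.
have ot := expg_order t.
have Hev : ~~ odd #[t].
  by have := chiX chiM t #[t]; rewrite ot chi1 chit andbT => <-.
set o' := (#[t])./2.
have Eo : #[t] = (o' * 2)%N.
  by rewrite -{1}(odd_double_half #[t]) (negbTE Hev) add0n muln2.
case Ho': (odd o').
  exists (t ^+ o'); apply: conclude.
  - exact: chiM.
  - by change (chi (t ^+ o')); rewrite (chiX chiM) Ho' chit.
  - by rewrite -expgM -Eo expg_order.
set q := o'./2.
have Eq : #[t] = (q * 4)%N.
  rewrite Eo -{1}(odd_double_half o') Ho' add0n -/q muln2; lia.
have q0 : (0 < q)%N by have := order_gt0 t; rewrite Eq; lia.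
have [r Er] : exists r, (2 * n = r * (q * 4))%N.
  by move: Ho; rewrite Eq => /dvdnP [r Hr]; exists r.
have oddq : odd q.
  case Hq: (odd q) => //; suff : (4 %| n)%N by rewrite (negbTE H4).
  apply/dvdnP.
  exists (r * q./2)%N; have := odd_double_half q; rewrite Hq add0n.
  by nia.
have oddr : odd r.
  case Hr: (odd r) => //; suff : (4 %| n)%N by rewrite (negbTE H4).
  apply/dvdnP.
  exists (r./2 * q)%N; have := odd_double_half r; rewrite Hr add0n.
  by nia.
have oddn2 : odd (n./2).
  have -> : n = ((r * q).*2)%N by rewrite -muln2; nia.
  by rewrite doubleK oddM oddr oddq.
set g := t ^+ q.
have chig : chi g by rewrite /g (chiX chiM) oddq chit.
set z := g * g.
have Ez : z = t ^+ (q * 2) by rewrite /z /g expgM expgS expg1.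
have chiz : chi z = false by rewrite /z chiM addbb.
have zz : z * z = 1 by rewrite Ez -expgD addnn -muln2 -mulnA -Eq expg_order.
have z1 : z != 1.
  apply/negP => /eqP H; move: (H); rewrite Ez => /eqP; rewrite -order_dvdn Eq.
  move=> /dvdn_leq; lia.
have cardA : #|[set w | ~~ chi w]| = n.
  have E : ~: [set w | ~~ chi w] = [set t * w | w in [set w | ~~ chi w]].
    apply/setP => x; rewrite !inE negbK; apply/idP/imsetP.
    - move=> Hx; exists (t^-1 * x); last by rewrite mulKVg.
      by rewrite inE chiM (chiV chiM) chit Hx.
    - by case=> w; rewrite inE => Hw ->; rewrite chiS.
  have := cardsC [set w | ~~ chi w]; rewrite E card_imset; last exact: mulgI.
  by rewrite Hcard addnn -mul2n => /eqP; rewrite eqn_pmul2l // => /eqP.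
pose sg (b : bool) : algC := if b then (-1)%R else 1%R.
have sgD : forall a b, sg (a (+) b) = (sg a * sg b)%R.
  by case; case; rewrite /sg /= ?mulr1 ?mul1r ?mulrNN ?mulr1.
have sg2 : forall a, (sg a * sg a = 1)%R.
  by case; rewrite /sg ?mulr1 ?mulrNN ?mulr1.
pose psi x : algC := if chi x then ('i * sg (dl chiM ((x * g^-1)%g)))%R else sg (dl chiM x).
have nA : ~~ chi (t * g^-1).
  by rewrite chiM (chiV chiM) chit chig.
have psiM : forall s b, chi s -> psi (s * b) = (psi s * psi b)%R.
  move=> s b Hs; have HA : chi (s * g^-1) = false by rewrite chiM (chiV chiM) Hs chig.
  rewrite /psi chiM Hs; case Hb: (chi b) => /=.
  - have HB : chi (b * g^-1) = false by rewrite chiM (chiV chiM) Hb chig.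
    have Esb : s * b = (s * g^-1) * ((b * g^-1) ^ g^-1) * z.
      by rewrite /z conjgE invgK !mulgA !mulgKV.
    rewrite Esb (dlM chiM); last by rewrite chiz.
    2: by rewrite (chiM (s * g^-1)) (chiJ chiM) HA HB.
    have nA' : ~~ chi (s * g^-1) by rewrite HA.
    have nB : ~~ chi ((b * g^-1) ^ g^-1) by rewrite (chiJ chiM) HB.
    rewrite (dlM chiM nA' nB) (dlJ chiM g^-1 (negbT HB)).
    rewrite (dl_invol chiM (negbT chiz) zz z1) cardA oddn2.
    move: (dl chiM (s * g^-1)) (dl chiM (b * g^-1)) => d1 d2.
    rewrite !sgD mulrACA -expr2 sqrCi [sg true]/sg mulrN1 mulN1r; by [].
  - have Esb : s * b * g^-1 = (s * g^-1) * (b ^ g^-1).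
      by rewrite conjgE invgK !mulgA mulgKV.
    have nA' : ~~ chi (s * g^-1) by rewrite HA.
    have nB : ~~ chi (b ^ g^-1) by rewrite (chiJ chiM) Hb.
    rewrite Esb (dlM chiM nA' nB) (dlJ chiM g^-1 (negbT Hb)).
    move: (dl chiM (s * g^-1)) (dl chiM b) => d1 d2.
    by rewrite sgD mulrA.
have psi1 : psi 1 = 1%R by rewrite /psi chi1 (dl1 chiM).
have chiSS : forall s, s \in S -> chi s by move=> s Hs; rewrite -(mulg1 s) chiS // chi1.
have psiV : forall s, s \in S -> psi s^-1 = (- psi s)%R.
  move=> s Hs; have h := psiM s s^-1 (chiSS s Hs); rewrite mulgV psi1 in h.
  have p2 : (psi s * psi s = -1)%R.
    rewrite /psi (chiSS s Hs); move: (dl chiM (s * g^-1)) => d.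
    by rewrite mulrACA -expr2 sqrCi sg2 mulr1.
  have -> : psi s^-1 = (- (psi s * psi s) * psi (s^-1)%g)%R by rewrite p2 opprK mul1r.
  by rewrite mulNr -mulrA -h mulr1.
have sum0 : (\sum_(s in S) psi s = 0)%R.
  have E : (\sum_(s in S) psi s = - \sum_(s in S) psi s)%R.
    rewrite {1}(reindex_inj (@invg_inj gT)) /=.
    rewrite -sumrN; apply: congr_big => //.
      move=> x; apply/idP/idP => [/SV|/SV]; by rewrite ?invgK.
    by move=> x /SV; rewrite invgK => /psiV.
  have : ((\sum_(s in S) psi s) *+ 2 == 0)%R by rewrite mulr2n {2}E subrr.
  by rewrite mulrn_eq0 /= => /eqP.
exfalso; move/negP: Heig; apply; apply/eigenvalueP.
exists (\row_i psi (enum_val i))%R.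
  rewrite scale0r; apply/rowP => j; rewrite !mxE.
  under eq_bigr => i _ do rewrite !mxE.
  rewrite -(big_enum_val (fun x => psi x * (cay_adj S x (enum_val j))%:R)%R).
  move: (enum_val j) => b.
  rewrite (eq_bigr (fun x => if x * b^-1 \in S then psi x else 0%R)); last first.
    by move=> x _; rewrite /cay_adj; case: (_ \in S); rewrite ?mulr1 ?mulr0.
  rewrite -big_mkcond /= (reindex (fun s => s * b)) /=; last first.
    by exists (fun x => x * b^-1) => x _; rewrite ?mulgK ?mulgKV.
  rewrite (eq_bigl (fun s => s \in S)); last by move=> x; rewrite mulgK.
  rewrite (eq_bigr (fun s => psi s * psi b)%R); last by move=> x Hx; rewrite psiM // chiSS.
  by rewrite -mulr_suml sum0 mul0r.
apply/negP => /eqP /rowP /(_ (enum_rank 1)); rewrite !mxE enum_rankK psi1.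
by move/eqP; rewrite oner_eq0.
Qed.
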